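(* For every metric space $M$, $\dim_{\mathrm{MST}}(M)\le\dim_{\mathrm{Box}}(M)$. More precisely, if $\dim_{\mathrm{Box}}(M)<\beta<\infty$, then there is a constant $C<\infty$ such that $E_\beta(T)\le C$ for every minimal spanning tree $T$ on any finite set of distinct points of $M$.
   Context: A minimal spanning tree (MST) on a finite set of points in a metric space is a spanning tree of the complete graph on those points that minimizes the sum of the edge lengths; for an edge $e$, $\|e\|$ is the distance between its endpoints, and for a tree $T$ and $d\ge 0$, $E_d(T)=\sum_{e\in T}\|e\|^d$. The MST dimension is \[ \dim_{\mathrm{MST}}(M):=\inf\{d\ge 0:\ \exists C<\infty \text{ such that } E_d(T)\le C \text{ for every MST } T \text{ on any finite set of distinct points of } M\}, \] with $\inf\emptyset=\infty$. For $\epsilon>0$ let $N(\epsilon)\in\{0,1,2,\dots\}\cup\{\infty\}$ be the maximal number of pairwise disjoint open balls of radius $\epsilon$ centered at points of $M$. The upper box dimension is \[ \dim_{\mathrm{Box}}(M):=\limsup_{\epsilon\to0}\frac{\log N(\epsilon)}{\log(1/\epsilon)}. \] *)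

(* Defs.v *)
From HB Require Import structures.
From mathcomp Require Import all_boot all_order all_algebra.
From mathcomp Require Import all_classical all_reals all_analysis.
Set Implicit Arguments. Unset Strict Implicit. Unset Printing Implicit Defensive.
Import Order.TTheory GRing.Theory Num.Theory.
Local Open Scope ring_scope.
Local Open Scope classical_set_scope.

Section Defs.
Variables (R : realType) (T : Type) (dist : T -> T -> R).

Definition is_metric : Prop :=
  [/\ forall x y, 0 <= dist x y,
      forall x y, dist x y = 0 <-> x = y,
      forall x y, dist x y = dist y x &
      forall x y z, dist x z <= dist x y + dist y z].

(* A graph on the vertex set 'I_n (a finite point set indexed by 'I_n):
   an edge {i,j} is encoded as the ordered pair (i,j) with i < j. *)
Definition edge_rel n (E : {set 'I_n * 'I_n}) : rel 'I_n :=
  fun i j => ((i, j) \in E) || ((j, i) \in E).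

Definition spanning_tree n (E : {set 'I_n * 'I_n}) : Prop :=
  [/\ forall e, e \in E -> (e.1 < e.2)%N,
      forall i j, connect (edge_rel E) i j &
      #|E| = n.-1].

Definition Ed n (p : 'I_n -> T) (E : {set 'I_n * 'I_n}) (d : R) : R :=
  \sum_(e in E) powR (dist (p e.1) (p e.2)) d.

Definition is_MST n (p : 'I_n -> T) (E : {set 'I_n * 'I_n}) : Prop :=
  spanning_tree E /\
  forall E' : {set 'I_n * 'I_n}, spanning_tree E' -> Ed p E 1 <= Ed p E' 1.

Definition dim_MST : \bar R :=
  ereal_inf [set d%:E | d in [set d : R | 0 <= d /\
    exists C : R, forall n (p : 'I_n -> T) (E : {set 'I_n * 'I_n}),
      injective p -> is_MST p E -> Ed p E d <= C]].

Definition packing (eps : R) (k : nat) : Prop :=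
  exists x : 'I_k -> T, forall i j, i != j ->
    ~ exists z, dist (x i) z < eps /\ dist (x j) z < eps.

Definition Npack (eps : R) : \bar R :=
  ereal_sup [set (k%:R)%:E | k in packing eps].

Definition box_ratio (eps : R) : \bar R :=
  match Npack eps with
  | (r%:E)%E => (ln r / ln (1 / eps))%:E
  | _ => (+oo)%E
  end.

(* upper box dimension: limsup_{eps -> 0+} log N(eps) / log(1/eps) *)
Definition dim_Box : \bar R :=
  ereal_inf [set ereal_sup [set box_ratio eps | eps in [set e : R | 0 < e < delta]]
            | delta in [set delta : R | 0 < delta]].

End Defs.

(* Main.v *)
Require Import Defs.
From HB Require Import structures.
From mathcomp Require Import all_boot all_order all_algebra.
From mathcomp Require Import all_classical all_reals all_analysis.
From mathcomp Require Import ring lra.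
Import Order.TTheory GRing.Theory Num.Theory.
Local Open Scope ring_scope.
Set Implicit Arguments. Unset Strict Implicit. Unset Printing Implicit Defensive.

Lemma edge_rel_sym n (E : {set 'I_n * 'I_n}) : symmetric (edge_rel E).
Proof. by move=> i j; rewrite /edge_rel orbC. Qed.

Lemma conn_closed (T : finType) (r : rel T) (Q : T -> bool) x y :
  (forall x y, r x y -> Q x -> Q y) -> connect r x y -> Q x -> Q y.
Proof.
move=> H /connectP [q pq ->]; elim: q x pq => //= z q IH x /andP[rxz pzq] Qx.
exact: IH pzq (H _ _ rxz Qx).
Qed.

Lemma conn_sub n (E1 E2 : {set 'I_n * 'I_n}) x y : E1 \subset E2 ->
  connect (edge_rel E1) x y -> connect (edge_rel E2) x y.
Proof.
move=> sE; apply: connect_sub => u v /orP[] h; apply: connect1;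
by rewrite /edge_rel (fintype.subsetP sE _ h) ?orbT.
Qed.

Lemma conn_card n (F : {set 'I_n * 'I_n}) (rho : 'I_n) :
  (forall v, connect (edge_rel F) v rho) -> (n.-1 <= #|F|)%N.
Proof.
move=> Hc; set r := edge_rel F.
have exP v : exists k, `[< exists q, [/\ path r v q, last v q = rho & size q = k] >].
  have /connectP [q pq lq] := Hc v.
  by exists (size q); apply/asboolP; exists q.
pose d v := ex_minn (exP v).
have dP v : exists q, [/\ path r v q, last v q = rho & size q = d v].
  by rewrite /d; case: ex_minnP => m /asboolP.
have dmin v q : path r v q -> last v q = rho -> (d v <= size q)%N.
  move=> pq lq; rewrite /d; case: ex_minnP => m _ Hm; apply: Hm.
  by apply/asboolP; exists q.
have step v : v != rho -> exists w, r v w && (d w < d v)%N.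
  move=> vr; have [[|w q] [pq lq sq]] := dP v.
    by move: vr; rewrite /= -lq eqxx.
  move: pq => /= /andP[rvw pwq]; exists w; rewrite rvw /=.
  by have := dmin w q pwq lq; rewrite -sq /=; case: (d v) => // k; rewrite ltnS.
pose nxt v := odflt v [pick w | r v w && (d w < d v)%N].
have nxtP v : v != rho -> r v (nxt v) && (d (nxt v) < d v)%N.
  move=> /step [w hw]; rewrite /nxt; case: pickP => [w' -> //|/(_ w)].
  by rewrite hw.
pose ed v := if (v, nxt v) \in F then (v, nxt v) else (nxt v, v).
pose rec (e : 'I_n * 'I_n) := if (d e.1 < d e.2)%N then e.2 else e.1.
have edF v : v != rho -> ed v \in F.
  move=> /nxtP /andP[/orP[] h _]; rewrite /ed; first by rewrite h.
  by case: ifP.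
have recK v : v != rho -> rec (ed v) = v.
  move=> /nxtP /andP[_ h]; rewrite /ed /rec; case: ((v, nxt v) \in F) => /=.
    by rewrite ltnNge (ltnW h).
  by rewrite h.
have -> : n.-1 = #|[set~ rho]| by rewrite cardsC1 card_ord.
rewrite -(@card_in_imset _ _ ed); last first.
  move=> u v; rewrite !in_setC1 => hu hv e; by rewrite -(recK u hu) e recK.
apply: subset_leq_card; apply/fintype.subsetP => e /imsetP [v]; rewrite in_setC1 => hv ->.
exact: edF.
Qed.

Lemma edge_split n (E : {set 'I_n * 'I_n}) e x y : edge_rel E x y ->
  edge_rel (E :\ e) x y \/ ((x, y) = e \/ (y, x) = e).
Proof.
rewrite /edge_rel !in_setD1 => /orP[] h; rewrite h !andbT.
  by have [exy|ne] := eqVneq (x, y) e; [right; left|left].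
have [exy|ne] := eqVneq (y, x) e; [by right; right|by left; rewrite orbT].
Qed.

Lemma csym n (F : {set 'I_n * 'I_n}) x y :
  connect (edge_rel F) x y = connect (edge_rel F) y x.
Proof. exact: (sym_connect_sym (@edge_rel_sym n F)). Qed.

Lemma F2 n (E : {set 'I_n * 'I_n}) e : e \in E ->
  (forall i j, connect (edge_rel E) i j) -> forall v,
  connect (edge_rel (E :\ e)) e.1 v || connect (edge_rel (E :\ e)) e.2 v.
Proof.
move=> eE Hc v.
apply: (@conn_closed _ (edge_rel E) (fun v => connect (edge_rel (E :\ e)) e.1 v
   || connect (edge_rel (E :\ e)) e.2 v) e.1 v) (Hc e.1 v) _; last first.
  by rewrite connect0.
move=> x y rxy Qx; have [h|[<-|<-]] := edge_split e rxy.
- by case/orP: Qx => c; rewrite (connect_trans c (connect1 h)) ?orbT.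
- by rewrite /= connect0 orbT.
- by rewrite /= connect0.
Qed.

Lemma avoid n (F : {set 'I_n * 'I_n}) e rho v :
  ~~ connect (edge_rel F) rho e.1 -> ~~ connect (edge_rel F) rho e.2 ->
  connect (edge_rel F) rho v -> connect (edge_rel (F :\ e)) rho v.
Proof.
move=> h1 h2 c.
have := @conn_closed _ (edge_rel F) (fun v => connect (edge_rel F) rho v &&
   connect (edge_rel (F :\ e)) rho v) rho v _ c.
rewrite !connect0 c /= => H; apply: H => // x y rxy /andP[cx cx'].
rewrite (connect_trans cx (connect1 rxy)) /=.
have [h|[exy|exy]] := edge_split e rxy.
- exact: connect_trans cx' (connect1 h).
- by move: h1; rewrite -exy /= cx.
- by move: h2; rewrite -exy /= cx.
Qed.

Lemma noconn n (E : {set 'I_n * 'I_n}) e : spanning_tree E -> e \in E ->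
  ~~ connect (edge_rel (E :\ e)) e.1 e.2.
Proof.
move=> [ord conn cardE] eE; apply/negP => h.
have H : forall v, connect (edge_rel (E :\ e)) v e.1.
  move=> v; case/orP: (F2 eE conn v) => c; first by rewrite csym.
  by rewrite csym (connect_trans h c).
have := conn_card H; rewrite -cardE (cardsD1 e E) eE.
by rewrite add1n ltnn.
Qed.

Definition child n (E : {set 'I_n * 'I_n}) rho (e : 'I_n * 'I_n) :=
  if connect (edge_rel (E :\ e)) rho e.1 then e.2 else e.1.
Definition parent n (E : {set 'I_n * 'I_n}) rho (e : 'I_n * 'I_n) :=
  if connect (edge_rel (E :\ e)) rho e.1 then e.1 else e.2.

Lemma child_nc n (E : {set 'I_n * 'I_n}) rho e : spanning_tree E -> e \in E ->
  ~~ connect (edge_rel (E :\ e)) rho (child E rho e).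
Proof.
move=> st eE; rewrite /child; case: ifP => h; last by rewrite h.
apply: contra (noconn st eE) => h2.
by apply: connect_trans _ h2; rewrite csym.
Qed.

Lemma parent_c n (E : {set 'I_n * 'I_n}) rho e : spanning_tree E -> e \in E ->
  connect (edge_rel (E :\ e)) rho (parent E rho e).
Proof.
move=> [ord conn cardE] eE; rewrite /parent; case: ifP => h //.
case/orP: (F2 eE conn rho) => c; last by rewrite csym.
by move: h; rewrite csym c.
Qed.

Lemma cp_edge n (E G : {set 'I_n * 'I_n}) rho e : e \in G ->
  edge_rel G (child E rho e) (parent E rho e).
Proof.
case: e => a b eG; rewrite /child /parent /edge_rel /=.
by case: ifP => _; rewrite eG ?orbT.
Qed.

Lemma cp_both n (E : {set 'I_n * 'I_n}) rho e (P : 'I_n -> bool) :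
  P (child E rho e) -> P (parent E rho e) -> P e.1 && P e.2.
Proof. by rewrite /child /parent; case: ifP => _ -> ->. Qed.

Lemma sep_conn n (E : {set 'I_n * 'I_n}) rho e f : spanning_tree E ->
  e \in E -> f \in E -> e != f ->
  ~~ connect (edge_rel (E :\ e)) (child E rho e) (child E rho f) ||
  ~~ connect (edge_rel (E :\ f)) (child E rho e) (child E rho f).
Proof.
move=> st eE fE ef; rewrite -negb_and; apply/negP => /andP[h1 h2].
have nce := child_nc rho st eE; have ncf := child_nc rho st fE.
have ncf_e : ~~ connect (edge_rel (E :\ e)) rho (child E rho f).
  by apply: contra nce => h; rewrite (connect_trans h) // csym.
have nce_f : ~~ connect (edge_rel (E :\ f)) rho (child E rho e).
  by apply: contra ncf => h; rewrite (connect_trans h).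
have eEf : e \in E :\ f by rewrite in_setD1 ef eE.
have fEe : f \in E :\ e by rewrite in_setD1 eq_sym ef fE.
have npe_f : ~~ connect (edge_rel (E :\ f)) rho (parent E rho e).
  apply: contra nce_f => h; apply: connect_trans h _; rewrite csym.
  exact/connect1/cp_edge.
have /andP[n1 n2] := @cp_both n E rho e
   (fun v => ~~ connect (edge_rel (E :\ f)) rho v) nce_f npe_f.
have := avoid n1 n2 (parent_c rho st fE).
move/(@conn_sub _ _ (E :\ e)).
have sub : E :\ f :\ e \subset E :\ e.
  by apply/fintype.subsetP => x; rewrite !in_setD1 => /and3P[-> _ ->].
move/(_ sub) => c; move: ncf_e; rewrite (connect_trans c) //.
by rewrite csym; exact/connect1/cp_edge.
Qed.

Lemma exch (R : realType) (T : Type) (dist : T -> T -> R) n (p : 'I_n -> T)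
  (E : {set 'I_n * 'I_n}) e a b :
  (forall x y, 0 <= dist x y) -> (forall x y, dist x y = dist y x) ->
  is_MST dist p E -> e \in E -> ~~ connect (edge_rel (E :\ e)) a b ->
  dist (p e.1) (p e.2) <= dist (p a) (p b).
Proof.
move=> d0 dsym [[ord conn cardE] mst] eE nab.
have ab_neq : a != b by apply: contra nab => /eqP ->; rewrite connect0.
pose ab := if (a < b)%N then (a, b) else (b, a).
pose E' := ab |: (E :\ e).
have abr : edge_rel E' a b.
  by rewrite /edge_rel /E' /ab; case: ifP; rewrite setU11 ?orbT.
have abnin : ab \notin E :\ e.
  apply: contra nab => h; apply: connect1; move: h.
  by rewrite /edge_rel /ab; case: ifP => _ h; rewrite h ?orbT.
have sub : E :\ e \subset E' := finset.subsetUr _ _.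
have Hst : spanning_tree E'.
  split.
  - move=> f; rewrite in_setU1 => /orP[/eqP->|]; last first.
      by rewrite in_setD1 => /andP[_ /ord].
    rewrite /ab; case: ifP => //= h.
    by rewrite ltn_neqAle leqNgt h eq_sym ab_neq.
  - have key : connect (edge_rel E') e.1 e.2.
      have cs x y := @conn_sub _ _ _ x y sub.
      case/orP: (F2 eE conn a) => ha; case/orP: (F2 eE conn b) => hb.
      + suff : connect (edge_rel (E :\ e)) a b by rewrite (negbTE nab).
        by apply: (connect_trans _ hb); rewrite (@csym _ (E :\ e) a e.1).
      + apply: connect_trans (cs _ _ ha) _; apply: connect_trans (connect1 abr) _.
        by rewrite csym; exact: cs.
      + apply: connect_trans (cs _ _ hb) _.
        have abr' : edge_rel E' b a by rewrite edge_rel_sym.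
        apply: connect_trans (connect1 abr') _; rewrite csym; exact: cs.
      + suff : connect (edge_rel (E :\ e)) a b by rewrite (negbTE nab).
        by apply: (connect_trans _ hb); rewrite csym.
    move=> i j.
    have hi : connect (edge_rel E') e.1 i.
      case/orP: (F2 eE conn i) => h; first exact: conn_sub h.
      exact: connect_trans key (conn_sub sub h).
    have hj : connect (edge_rel E') e.1 j.
      case/orP: (F2 eE conn j) => h; first exact: conn_sub h.
      exact: connect_trans key (conn_sub sub h).
    by apply: connect_trans hj; rewrite csym.
  - by rewrite cardsU1 abnin -cardE (cardsD1 e E) eE.
have := mst _ Hst; rewrite /Ed (big_setD1 e eE) (big_setU1 _ abnin) /=.
rewrite lerD2r !powRr1 //; move=> H; apply: le_trans H _.
by rewrite /ab; case: ifP => _ //=; rewrite dsym.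
Qed.

Lemma long_pack (R : realType) (T : Type) (dist : T -> T -> R) n (p : 'I_n -> T)
  (E : {set 'I_n * 'I_n}) (x0 : T) (r : R) :
  is_metric dist -> is_MST dist p E -> 0 < r ->
  packing dist (r / 2) #|[set e in E | r <= dist (p e.1) (p e.2)]|.
Proof.
move=> [d0 deq dsym dtri] mst r0.
case: n p E mst => [|n] p E mst.
  by exists (fun _ => x0) => i; have := ltn_ord (enum_val i).1.
exists (fun i => p (child E ord0 (enum_val i))) => i j ij [z [hi hj]].
have := enum_valP i; have := enum_valP j; rewrite !inE => /andP[fE rf] /andP[eE re].
have ef : enum_val i != enum_val j :> ('I_n.+1 * 'I_n.+1).
  by apply: contra ij => /eqP /enum_val_inj ->.
have st := mst.1.
have [h|h] := orP (sep_conn ord0 st eE fE ef).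
  have := exch d0 dsym mst eE h.
  move: (dtri (p (child E ord0 (enum_val i))) z (p (child E ord0 (enum_val j)))).
  rewrite (dsym z) => t1 t2.
  have t3 : dist (p (child E ord0 (enum_val i))) (p (child E ord0 (enum_val j))) < r.
    by apply: le_lt_trans t1 _; rewrite [X in _ < X]splitr ltrD.
  by have := le_lt_trans (le_trans re t2) t3; rewrite ltxx.
have := exch d0 dsym mst fE h.
move: (dtri (p (child E ord0 (enum_val i))) z (p (child E ord0 (enum_val j)))).
rewrite (dsym z) => t1 t2.
have t3 : dist (p (child E ord0 (enum_val i))) (p (child E ord0 (enum_val j))) < r.
  by apply: le_lt_trans t1 _; rewrite [X in _ < X]splitr ltrD.
by have := le_lt_trans (le_trans rf t2) t3; rewrite ltxx.
Qed.

Lemma rank_sum (R : realType) (X : finType) (S : {set X}) (w : X -> R) (A s q : R) :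
  0 < s -> 0 <= q -> (forall e, e \in S -> 0 <= w e) ->
  (forall e, e \in S -> #|[set f in S | w e <= w f]|%:R * w e `^ s <= A) ->
  \sum_(e in S) (w e `^ s) `^ q <= \sum_(k < #|S|) (A / k.+1%:R) `^ q.
Proof.
move=> s0 q0; move Hn : #|S| => m; elim: m S Hn => [|m IH] S Hn w0 HA.
  by rewrite (cards0_eq Hn) big_set0 big_ord0.
have /card_gt0P [e0 e0S] : (0 < #|S|)%N by rewrite Hn.
have [e1 e1S Hmin] := @arg_minP _ _ _ e0 (fun x => x \in S) w e0S.
rewrite (big_setD1 e1 e1S) big_ord_recr /= addrC.
have HS' : #|S :\ e1| = m by move: Hn; rewrite (cardsD1 e1) e1S add1n => -[].
apply: lerD.
  apply: IH => // [e|e]; rewrite in_setD1 => /andP[_ eS]; first exact: w0.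
  apply: le_trans (HA e eS); apply: ler_wpM2r; first exact: powR_ge0.
  rewrite ler_nat; apply: subset_leq_card; apply/fintype.subsetP => f.
  by rewrite !inE => /andP[/andP[_ ->] ->].
have cnt : [set f in S | w e1 <= w f] = S.
  by apply/setP => f; rewrite inE; case fS: (f \in S) => //=; exact: Hmin.
have := HA e1 e1S; rewrite cnt Hn => h.
apply: ge0_ler_powR => //; rewrite ?nnegrE ?powR_ge0 //.
  by apply: divr_ge0 => //; apply: le_trans h; apply: mulr_ge0 => //; exact: powR_ge0.
by rewrite ler_pdivlMr // ?ltr0Sn // mulrC.
Qed.

Lemma dyad (R : realType) (h : nat -> R) :
  (forall i j, (0 < i <= j)%N -> h j <= h i) -> (forall i, 0 <= h i) ->
  forall J, \sum_(1 <= k < (2 ^ J)%N) h k <= \sum_(j < J) (2 ^ j)%N%:R * h (2 ^ j)%N.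
Proof.
move=> hdec h0; elim=> [|J IH]; first by rewrite big_geq // big_ord0.
rewrite (@big_cat_nat _ _ _ (2 ^ J)%N) //=; last first.
  by rewrite leq_exp2l.
  by rewrite expn_gt0.
rewrite big_ord_recr /=; apply: lerD => //.
apply: le_trans (@ler_sum_nat _ _ _ _ (fun=> h (2 ^ J)%N) _) _.
  by move=> i /andP[hi _]; apply: hdec; rewrite expn_gt0 hi.
rewrite sumr_const_nat expnS mul2n -addnn addnK mulrC.
by rewrite mulr_natr.
Qed.

Lemma geom (R : realType) (r : R) : 0 <= r < 1 ->
  forall J, \sum_(j < J) r ^+ j <= (1 - r)^-1.
Proof.
move=> /andP[r0 r1] J.
have e : (1 - r) * \sum_(j < J) r ^+ j = 1 - r ^+ J.
  elim: J => [|J IH]; first by rewrite big_ord0 expr0 mulr0 subrr.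
  by rewrite big_ord_recr /= mulrDr IH exprS; ring.
have r1' : 0 < 1 - r by rewrite subr_gt0.
rewrite -[X in X <= _](mulKf (lt0r_neq0 r1')) e ler_pdivrMl //.
by rewrite mulrC mulVf ?lt0r_neq0 // gerBl exprn_ge0.
Qed.

Lemma inv_powR (R : realType) (x q : R) : 0 < x -> (x^-1) `^ q = (x `^ q)^-1.
Proof.
move=> x0; have : (x * x^-1) `^ q = 1 by rewrite mulfV ?lt0r_neq0 // powR1.
rewrite powRM ?invr_ge0 ?ltW // => h.
by rewrite -[LHS]mul1r -(mulVf (lt0r_neq0 (powR_gt0 q x0))) -mulrA h mulr1.
Qed.

Lemma powR_exp (R : realType) (x q : R) j : 0 <= x -> (x ^+ j) `^ q = (x `^ q) ^+ j.
Proof.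
move=> x0; elim: j => [|j IH]; first by rewrite !expr0 powR1.
by rewrite !exprS powRM ?exprn_ge0 // IH.
Qed.

Lemma two_lt_powR (R : realType) (q : R) : 1 < q -> 2 < (2 : R) `^ q.
Proof.
move=> q1; rewrite /powR gt_eqF // -[X in X < _](@lnK R 2) ?posrE //.
rewrite ltr_expR -[X in X < _]mul1r ltr_pM2r //.
by apply: ln_gt0; rewrite ltr1n.
Qed.

Lemma psum (R : realType) (A q : R) : 0 <= A -> 1 < q ->
  exists C, forall m, \sum_(k < m) (A / k.+1%:R) `^ q <= C.
Proof.
move=> A0 q1; set r := 2 / (2 : R) `^ q.
have p2 : 0 < (2 : R) `^ q by apply: powR_gt0.
have r0 : 0 <= r by rewrite /r divr_ge0 // ltW.
have r1 : r < 1 by rewrite /r ltr_pdivrMr // mul1r two_lt_powR.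
exists (A `^ q * (1 - r)^-1) => m.
pose h k := (A / k%:R) `^ q.
have hdec : forall i j, (0 < i <= j)%N -> h j <= h i.
  move=> i j /andP[i0 ij]; apply: ge0_ler_powR; rewrite ?nnegrE ?divr_ge0 ?ler0n //; try exact: ltW.
    by apply: ltW; apply: lt_trans q1.
  apply: ler_wpM2l => //; rewrite lef_pV2 ?posrE ?ltr0n ?ler_nat //.
  exact: leq_trans i0 ij.
have h0 i : 0 <= h i by apply: powR_ge0.
have -> : \sum_(k < m) (A / k.+1%:R) `^ q = \sum_(1 <= k < m.+1) h k.
  by rewrite big_add1 /= big_mkord.
apply: le_trans (_ : \sum_(1 <= k < (2 ^ m)%N) h k <= _).
  rewrite [X in _ <= X](@big_cat_nat _ _ _ m.+1) //=; first by rewrite lerDl sumr_ge0.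
  exact: ltn_expl.
apply: le_trans (dyad hdec h0 m) _.
have -> : \sum_(j < m) (2 ^ j)%N%:R * h (2 ^ j)%N = A `^ q * \sum_(j < m) r ^+ j.
  rewrite mulr_sumr; apply: eq_bigr => j _.
  rewrite /h natrX powRM ?invr_ge0 ?exprn_ge0 // inv_powR ?exprn_gt0 //.
  by rewrite powR_exp // /r exprMn exprVn; ring.
by apply: ler_wpM2l; [exact: powR_ge0 | apply: geom; rewrite r0].
Qed.

Lemma pack_mono (R : realType) (T : Type) (dist : T -> T -> R) (a b : R) k :
  a <= b -> packing dist b k -> packing dist a k.
Proof.
move=> ab [x hx]; exists x => i j ij [z [h1 h2]]; apply: (hx i j ij).
by exists z; split; apply: lt_le_trans ab.
Qed.

Lemma pack0 (R : realType) (T : Type) (dist : T -> T -> R) (x0 : T) eps :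
  packing dist eps 0.
Proof. by exists (fun _ => x0) => -[]. Qed.

Lemma diam (R : realType) (T : Type) (dist : T -> T -> R) (x0 : T) (e0 B : R) :
  is_metric dist -> 0 < e0 -> (forall k, packing dist e0 k -> k%:R <= B) ->
  exists D, forall x y, dist x y <= D.
Proof.
move=> [d0 deq dsym dtri] e0p PB.
have B0 : 0 <= B by have := PB 0%N (pack0 dist x0 e0).
have exP : exists k, `[< packing dist e0 k >].
  by exists 0%N; apply/asboolP; exact: pack0.
have bP : forall k, `[< packing dist e0 k >] -> (k <= Num.bound B)%N.
  move=> k /asboolP /PB hk; apply: ltnW; rewrite -(ltr_nat R).
  exact: le_lt_trans hk (archi_boundP B0).
case: (ex_maxnP exP bP) => K /asboolP [c hc] Kmax.
have cover : forall y, exists i : 'I_K, dist (c i) y < e0 + e0.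
  move=> y; apply: contrapT => H.
  have : packing dist e0 K.+1.
    exists (fun i => if unlift ord_max i is Some j then c j else y) => i j.
    case: unliftP => [i' ->|->]; case: unliftP => [j' ->|->] => ij.
    - by apply: hc; apply: contra ij => /eqP ->.
    - move=> [z [h1 h2]]; apply: H; exists i'.
      by apply: le_lt_trans (dtri _ z _) _; rewrite (dsym z); exact: ltrD.
    - move=> [z [h1 h2]]; apply: H; exists j'.
      by apply: le_lt_trans (dtri _ z _) _; rewrite (dsym z); exact: ltrD.
    - by rewrite eqxx in ij.
  by move/asboolP/Kmax; rewrite ltnn.
have dsum i j : dist (c i) (c j) <= \sum_i' \sum_j' dist (c i') (c j').
  rewrite (bigD1 i) //= (bigD1 j) //= -addrA lerDl addr_ge0 //.
    by apply: sumr_ge0 => *; exact: d0.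
  by apply: sumr_ge0 => *; apply: sumr_ge0 => *; exact: d0.
exists ((e0 + e0) + (e0 + e0) + \sum_i' \sum_j' dist (c i') (c j')) => x y.
have [i hi] := cover x; have [j hj] := cover y.
apply: le_trans (dtri x (c i) y) _; rewrite (dsym x).
apply: le_trans (lerD (ltW hi) (dtri (c i) (c j) y)) _.
have := dsum i j; have := ltW hj; lra.
Qed.

Lemma main_bound (R : realType) (T : Type) (dist : T -> T -> R) (x0 : T) (e1 s beta : R) :
  is_metric dist -> 0 < e1 <= 1 -> 0 < s < beta ->
  (forall eps k, 0 < eps < e1 -> packing dist eps k -> k%:R <= (eps^-1) `^ s) ->
  exists C, forall n (p : 'I_n -> T) (E : {set 'I_n * 'I_n}),
    injective p -> is_MST dist p E -> Ed dist p E beta <= C.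
Proof.
move=> met /andP[e10 e11] /andP[s0 sb] PB.
have [d0 deq dsym dtri] := met.
have e0r : 0 < e1 / 2 < e1 by apply/andP; split; lra.
have [D HD] := diam x0 met (proj1 (andP e0r)) (fun k => PB _ k e0r).
have D0 : 0 <= D := le_trans (d0 x0 x0) (HD x0 x0).
set A := 2 `^ s + (2 / e1) `^ s * D `^ s.
have A0 : 0 <= A by rewrite addr_ge0 ?mulr_ge0 ?powR_ge0.
set q := beta / s.
have q1 : 1 < q by rewrite /q ltr_pdivlMr // mul1r.
have [C HC] := psum A0 q1.
exists C => n p E pinj mst.
pose w := fun e : 'I_n * 'I_n => dist (p e.1) (p e.2).
have wpos e : e \in E -> 0 < w e.
  move=> eE; rewrite lt0r d0 andbT; apply/eqP => /deq /pinj h.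
  by have [[ord _ _] _] := mst; have := ord e eE; rewrite h ltnn.
have rank e : e \in E -> #|[set f in E | w e <= w f]|%:R * w e `^ s <= A.
  move=> eE; have pk := long_pack x0 met mst (wpos e eE).
  have we := wpos e eE.
  case: (ltP (w e / 2) e1) => h.
  - have hr : 0 < w e / 2 < e1 by apply/andP; split => //; lra.
    have hk := PB _ _ hr pk.
    apply: le_trans (ler_wpM2r (powR_ge0 _ _) hk) _.
    have we' : 0 <= w e := ltW we.
    rewrite -powRM ?invr_ge0 ?divr_ge0 // invf_div mulfVK ?lt0r_neq0 //.
    by rewrite lerDl mulr_ge0 ?powR_ge0.
  - have pk' := pack_mono (ltac:(lra) : e1 / 2 <= w e / 2) pk.
    have hk := PB _ _ e0r pk'.
    apply: le_trans (ler_wpM2r (powR_ge0 _ _) hk) _.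
    rewrite invf_div; apply: le_trans (_ : (2 / e1) `^ s * D `^ s <= _); last first.
      by rewrite lerDr powR_ge0.
    apply: ler_wpM2l; first exact: powR_ge0.
    apply: ge0_ler_powR; [exact: ltW | by rewrite nnegrE ltW | by rewrite nnegrE | exact: HD].
have := rank_sum s0 (ltW (lt_trans ltr01 q1)) (fun e eE => ltW (wpos e eE)) rank.
move=> H; apply: le_trans (HC #|E|); apply: le_trans H.
rewrite /Ed le_eqVlt; apply/orP; left; apply/eqP; apply: eq_bigr => e _.
by rewrite -powRrM /q mulrC divfK ?lt0r_neq0.
Qed.

Lemma pack1 (R : realType) (T : Type) (dist : T -> T -> R) (x0 : T) eps :
  packing dist eps 1.
Proof. by exists (fun _ => x0) => i j; rewrite !ord1 eqxx. Qed.

Lemma boxG (R : realType) (T : Type) (dist : T -> T -> R) (x0 : T) (beta : R) :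
  (dim_Box dist < beta%:E)%E ->
  exists e1 s, [/\ 0 < e1 <= 1, 0 < s < beta &
    forall eps k, 0 < eps < e1 -> packing dist eps k -> k%:R <= (eps^-1) `^ s].
Proof.
move=> /ereal_inf_lt [y [delta d0 <-] hy].
have Mub eps : 0 < eps < delta -> (box_ratio dist eps <=
   ereal_sup [set box_ratio dist e | e in [set e | (0 < e < delta)%R]])%E.
  by move=> h; apply: ereal_sup_ubound; exists eps.
have [s0 Ms0 s0b] : exists2 s0 : R,
   (ereal_sup [set box_ratio dist e | e in [set e | (0 < e < delta)%R]] < s0%:E)%E
   & s0 < beta.
  move: hy; case: (ereal_sup _) => [r| |] //= h.
    by exists ((r + beta) / 2); rewrite ?lte_fin; move: h; rewrite lte_fin => h; lra.
  by exists (beta - 1); rewrite ?ltNye //; lra.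
set e1 := Order.min delta 1.
have e1p : 0 < e1 by rewrite lt_min d0 ltr01.
have PB0 : forall eps k, 0 < eps < e1 -> packing dist eps k ->
    k%:R <= (eps^-1) `^ s0 /\ 0 <= s0.
  move=> eps k /andP[ep]; rewrite lt_min => /andP[epd ep1] pk.
  have hlt := le_lt_trans (Mub eps (ltac:(by rewrite ep epd))) Ms0.
  have hk : ((k%:R)%:E <= Npack dist eps)%E.
    by apply: ereal_sup_ubound; exists k.
  have h1 : ((1%:R)%:E <= Npack dist eps)%E.
    by apply: ereal_sup_ubound; exists 1%N => //; exact: pack1.
  have L0 : 0 < ln (eps^-1) by apply: ln_gt0; rewrite invf_gt1.
  have ei0 : eps^-1 != 0 by rewrite invr_eq0 lt0r_neq0.
  move: hlt hk h1; rewrite /box_ratio; case: (Npack dist eps) => [r| |] //= hlt hk h1.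
  rewrite lte_fin in hlt; rewrite lee_fin in hk h1.
  have r0 : 0 < r by exact: lt_le_trans ltr01 h1.
  rewrite div1r ltr_pdivrMr // in hlt.
  have hr : r <= (eps^-1) `^ s0.
    rewrite /powR (negbTE ei0) -[r]lnK ?posrE //; apply: ltW; rewrite ltr_expR.
    exact: hlt.
  split; first exact: le_trans hk hr.
  have : 1 <= (eps^-1) `^ s0 by apply: le_trans hr; move: h1; rewrite lee_fin.
  rewrite /powR (negbTE ei0) -expR0 ler_expR => h; nra.
have s00 : 0 <= s0.
  by apply: (proj2 (PB0 (e1 / 2) 1%N _ (pack1 dist x0 _))); apply/andP; split; lra.
exists e1, ((s0 + beta) / 2); split.
- by rewrite e1p ge_min lexx orbT.
- by apply/andP; split; lra.
move=> eps k he pk; have [hk _] := PB0 eps k he pk.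
apply: le_trans hk _; apply: ler_powR; last by lra.
have /andP[ep] := he; rewrite lt_min => /andP[_ ep1].
by rewrite invf_ge1 // ltW.
Qed.

Unset Implicit Arguments.

Theorem lemma6 (R : realType) (T : Type) (dist : T -> T -> R) :
  is_metric dist -> (exists x : T, True) ->
  (dim_MST dist <= dim_Box dist)%E /\
  (forall beta : R, (dim_Box dist < beta%:E)%E ->
    exists C : R, forall n (p : 'I_n -> T) (E : {set 'I_n * 'I_n}),
      injective p -> is_MST dist p E -> Ed dist p E beta <= C).
Proof.
move=> met [x0 _].
have part2 : forall beta : R, (dim_Box dist < beta%:E)%E -> 0 <= beta /\
    exists C : R, forall n (p : 'I_n -> T) (E : {set 'I_n * 'I_n}),
      injective p -> is_MST dist p E -> Ed dist p E beta <= C.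
  move=> beta hb; have [e1 [s [he1 hs PB]]] := boxG x0 hb.
  split; first by case/andP: hs => h1 h2; lra.
  by have := main_bound x0 met he1 hs PB.

split; last by move=> beta hb; have [_ ?] := part2 beta hb.
case E : (dim_Box dist) => [r| |].
- apply/lee_addgt0Pr => e e0.
  have hb : (dim_Box dist < (r + e)%:E)%E by rewrite E lte_fin; lra.
  have [b0 [C HC]] := part2 (r + e) hb.
  rewrite -EFinD; apply: ereal_inf_lbound; exists (r + e) => //.
  by split => //; exists C.
- exact: leey.
- have hb : (dim_Box dist < (-1)%:E)%E by rewrite E ltNye.
  have [] := part2 (-1) hb.
  by rewrite ler0N1.
Qed.
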